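(* Let $R\subseteq S$, $\sigma$ be as in the context, and $n=n_1+\cdots+n_\ell$. Let $\mathbf{a}=(a_1,\ldots,a_\ell)\in(S^* )^\ell$ and $\beta_{i,j}\in S$ ($1\le i\le\ell$, $1\le j\le n_i$) satisfy: (i) $a_i-a_j^\beta\in S^*$ for all $\beta\in S^*$ and $1\le i<j\le\ell$; (ii) for each $i$, $\beta_{i,1},\ldots,\beta_{i,n_i}$ are $R$-linearly independent. Then the $n\times n$ matrix $M_n(\mathbf{a},\boldsymbol\beta)$ over $S$, whose rows are indexed by $s=0,1,\ldots,n-1$, whose columns are indexed by the pairs $(i,j)$ in the order $(1,1),\ldots,(1,n_1),\ldots,(\ell,1),\ldots,(\ell,n_\ell)$, and whose $(s,(i,j))$ entry is $\mathcal{D}_{a_i}^s(\beta_{i,j})$, is invertible.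
   Context: $R$ is a finite commutative chain ring with maximal ideal $\mathfrak{m}$, $q=|R/\mathfrak{m}|$; $S=R[x]/(h)$ with $h$ monic of degree $m$ irreducible modulo $\mathfrak{m}$, local with maximal ideal $\mathfrak{M}=\mathfrak{m}S$ and unit group $S^*=S\setminus\mathfrak{M}$. $\sigma$ is a ring automorphism of $S$ generating the Galois group of $R\subseteq S$, with fixed ring $R$, reducing modulo $\mathfrak{M}$ to $y\mapsto y^q$. For $a,\beta\in S$: $N_s(a)=\sigma^{s-1}(a)\cdots\sigma(a)a$ ($N_0(a)=1$) and $\mathcal{D}_a^s(\beta)=\sigma^s(\beta)N_s(a)$. For $\beta\in S^*$, $a^\beta=\sigma(\beta)a\beta^{-1}$. *)

(* Defs.v *)
From HB Require Import structures.
From mathcomp Require Import all_boot all_order all_algebra.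
Set Implicit Arguments. Unset Strict Implicit. Unset Printing Implicit Defensive.
Import Order.TTheory GRing.Theory Num.Theory.
Local Open Scope ring_scope.

Definition is_ideal (R : finComUnitRingType) (I : {set R}) : Prop :=
  [/\ 0 \in I, (forall x y, x \in I -> y \in I -> x + y \in I)
    & (forall r x, x \in I -> r * x \in I)].

Definition chain_ring (R : finComUnitRingType) : Prop :=
  forall I J : {set R}, is_ideal I -> is_ideal J -> I \subset J \/ J \subset I.

(* the maximal ideal m of the (local) chain ring: its non-units *)
Definition maxid (R : finComUnitRingType) : {set R} :=
  [set r : R | r \isn't a GRing.unit].

(* q = |R / m| *)
Definition resq (R : finComUnitRingType) : nat := (#|R| %/ #|maxid R|)%N.

(* a polynomial whose reduction mod m is a unit of (R/m)[x] *)
Definition unit_mod_m (R : finComUnitRingType) (f : {poly R}) : Prop :=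
  f`_0 \is a GRing.unit /\ (forall i, (0 < i)%N -> f`_i \in maxid R).

(* h is irreducible modulo m: its reduction is nonconstant and has only
   trivial factorizations in (R/m)[x] *)
Definition irreducible_mod_m (R : finComUnitRingType) (h : {poly R}) : Prop :=
  (1 < size h)%N /\
  forall f g : {poly R}, (forall i, (h - f * g)`_i \in maxid R) ->
    unit_mod_m f \/ unit_mod_m g.

Definition aeval (R : finComUnitRingType) (S : comUnitAlgType R)
  (xi : S) (p : {poly R}) : S := (map_poly (GRing.in_alg S) p).[xi].

(* S = R[x]/(h) as an R-algebra, with x mapped to xi *)
Definition presents (R : finComUnitRingType) (S : comUnitAlgType R)
  (h : {poly R}) (xi : S) : Prop :=
  (forall y : S, exists p : {poly R}, y = aeval xi p) /\
  (forall p : {poly R}, aeval xi p = 0 <-> exists g : {poly R}, p = g * h).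

Definition R_aut (R : finComUnitRingType) (S : comUnitAlgType R)
  (tau : {rmorphism S -> S}) : Prop :=
  bijective tau /\ forall r : R, tau (r%:A) = r%:A.

(* sigma generates the Galois group, has fixed ring R, and reduces
   modulo M = mS (= the non-units of the local ring S) to y |-> y^q *)
Definition galois_generator (R : finComUnitRingType) (S : comUnitAlgType R)
  (sigma : {rmorphism S -> S}) : Prop :=
  [/\ R_aut sigma,
      (forall tau : {rmorphism S -> S}, R_aut tau ->
         exists k : nat, forall y, tau y = iter k sigma y),
      (forall y : S, sigma y = y -> exists r : R, y = r%:A)
    & (forall y : S, (sigma y - y ^+ resq R) \isn't a GRing.unit)].

Definition Nsig (R : finComUnitRingType) (S : comUnitAlgType R)
  (sigma : {rmorphism S -> S}) (s : nat) (a : S) : S :=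
  \prod_(k < s) iter k sigma a.

Definition Dop (R : finComUnitRingType) (S : comUnitAlgType R)
  (sigma : {rmorphism S -> S}) (a : S) (s : nat) (beta : S) : S :=
  iter s sigma beta * Nsig sigma s a.

Definition sconj (R : finComUnitRingType) (S : comUnitAlgType R)
  (sigma : {rmorphism S -> S}) (a beta : S) : S :=
  sigma beta * a * beta^-1.

Definition Mmat (R : finComUnitRingType) (S : comUnitAlgType R)
  (sigma : {rmorphism S -> S}) (l : nat) (n : 'I_l -> nat)
  (a : 'I_l -> S) (beta : forall i : 'I_l, 'I_(n i) -> S)
  : 'M[S]_(\sum_(i < l) n i, \sum_(i < l) n i) :=
  mxrow (fun i : 'I_l =>
    \matrix_(s < \sum_(i0 < l) n i0, j < n i) Dop sigma (a i) s (beta i j)).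

(* Main.v *)
Require Import Defs.
From HB Require Import structures.
From mathcomp Require Import all_boot all_order all_algebra.
From mathcomp Require Import ring.
Import GRing.Theory.
Local Open Scope ring_scope.
Set Implicit Arguments. Unset Strict Implicit. Unset Printing Implicit Defensive.

Local Open Scope quotient_scope.
Section Residue.
Variable R : finComUnitRingType.
Hypothesis chR : chain_ring R.

Definition pI (x : R) : {set R} := [set t * x | t : R].

Lemma pI_ideal x : is_ideal (pI x).
Proof.
split.
- by apply/imsetP; exists 0 => //; rewrite mul0r.
- move=> u v /imsetP[t _ ->] /imsetP[t' _ ->]; apply/imsetP; exists (t + t') => //.
  by rewrite mulrDl.
- move=> r u /imsetP[t _ ->]; apply/imsetP; exists (r * t) => //; by rewrite mulrA.
Qed.

Lemma pI_self x : x \in pI x.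
Proof. by apply/imsetP; exists 1 => //; rewrite mul1r. Qed.

Lemma pIP x y : reflect (exists t : R, y = t * x) (y \in pI x).
Proof.
apply: (iffP imsetP) => [[t _ ->]|[t ->]]; by exists t.
Qed.

Lemma pI_cmp x y : (exists t : R, x = t * y) \/ (exists t : R, y = t * x).
Proof.
case: (chR (pI_ideal x) (pI_ideal y)) => /subsetP H.
- by left; apply/pIP; apply: H; apply: pI_self.
- by right; apply/pIP; apply: H; apply: pI_self.
Qed.

Definition mpred : {pred R} := [pred x : R | x \isn't a GRing.unit].
Lemma mpredE x : (x \in mpred) = (x \isn't a GRing.unit). Proof. by []. Qed.

Lemma mpred_add x y : x \in mpred -> y \in mpred -> x + y \in mpred.
Proof.
rewrite !mpredE => ux uy.
case: (pI_cmp x y) => [[t ->]|[t ->]].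
- by rewrite -{2}[y]mul1r -mulrDl unitrM negb_and uy orbT.
- by rewrite -{1}[x]mul1r -mulrDl unitrM negb_and ux orbT.
Qed.

Lemma mpred_ideal : idealr_closed mpred.
Proof.
split.
- by rewrite mpredE unitr0.
- by rewrite mpredE unitr1.
- move=> r u v uI vI; apply: mpred_add => //.
  by move: uI; rewrite !mpredE unitrM negb_and => ->; rewrite orbT.
Qed.

HB.instance Definition _ := isIdealr.Build R mpred mpred_ideal.

Definition kF := {ideal_quot mpred}.
HB.instance Definition _ := GRing.ComNzRing.on kF.

Definition piR (x : R) : kF := \pi_kF x.

Lemma piR_eq0 x : (piR x == 0) = (x \in mpred).
Proof.
have -> : (0 : kF) = \pi_kF 0 by rewrite /kF; exact: (esym (rmorph0 _)).
by rewrite -Quotient.idealrBE subr0.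
Qed.


Lemma piRK (x : kF) : piR (repr x) = x.
Proof. exact: reprK. Qed.

Lemma piR_is_mult : forall x y, piR (x * y) = piR x * piR y.
Proof. by move=> x y; rewrite /piR rmorphM. Qed.

Lemma piR_add : forall x y, piR (x + y) = piR x + piR y.
Proof. by move=> x y; rewrite /piR rmorphD. Qed.

Lemma piR1 : piR 1 = 1.
Proof. by rewrite /piR rmorph1. Qed.

Definition kinv (x : kF) : kF := piR (repr x)^-1.

Lemma kmulVf (x : kF) : x != 0 -> kinv x * x = 1.
Proof.
move=> nx; rewrite /kinv -{2}(piRK x) -piR_is_mult.
have : repr x \is a GRing.unit.
  by move: nx; rewrite -{1}(piRK x) piR_eq0 mpredE negbK.
by move=> u; rewrite mulVr // piR1.
Qed.

Lemma kinv0 : kinv 0 = 0.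
Proof.
rewrite /kinv invr_out; first by rewrite piRK.
by rewrite -mpredE -piR_eq0 piRK.
Qed.

HB.instance Definition _ := GRing.ComNzRing_isField.Build kF kmulVf kinv0.


Lemma zdiv (r : R) : r \isn't a GRing.unit -> exists2 c : R, c != 0 & c * r = 0.
Proof.
move=> nr; case: (pickP (fun c : R => (c != 0) && (c * r == 0))) => [c /andP[c0 /eqP cr]|H].
  by exists c.
have inj : injective (fun c : R => c * r).
  move=> c1 c2 /= e; apply/eqP; rewrite -subr_eq0; apply: contraT => ne.
  by move: (H (c1 - c2)); rewrite ne /= mulrBl e subrr eqxx.
have [g _ fg] := injF_bij inj.
by move: nr; have /unitrPr -> // : exists y, r * y = 1 by exists (g 1); rewrite mulrC fg.
Qed.

Lemma one_sub_unit (y : R) : y \isn't a GRing.unit -> 1 - y \is a GRing.unit.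
Proof.
move=> ny; apply: contraT => nu.
have := mpred_add (x := 1 - y) (y := y); rewrite !mpredE subrK unitr1.
by move=> /(_ nu ny).
Qed.

Lemma nilp (r : R) : r \isn't a GRing.unit -> exists K, r ^+ K = 0.
Proof.
move=> nr.
pose f (i : 'I_(#|R|.+1)) := r ^+ i.
have : ~~ injectiveb f.
  by apply/negP => /injectiveP /leq_card; rewrite card_ord ltnn.
case/injectivePn => i [j ij fij].
have gen : forall i j : nat, (i < j)%N -> r ^+ i = r ^+ j -> exists K, r ^+ K = 0.
  move=> i0 j0 lt e; exists i0.
  have : r ^+ i0 * (1 - r ^+ (j0 - i0)) = 0.
    by rewrite mulrBr mulr1 -exprD subnKC ?(ltnW lt) // e subrr.
  move/(congr1 (fun z => z * (1 - r ^+ (j0 - i0))^-1)).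
  by rewrite mul0r -mulrA mulrV ?mulr1 // one_sub_unit // unitrX_pos ?subn_gt0.
case: (ltngtP i j) => [lt|lt|e]; first exact: gen lt fij.
  exact: gen lt (esym fij).
by move: ij; rewrite (val_inj e) eqxx.
Qed.

Lemma gen_seq (s : seq R) : exists p : R, (s = [::] \/ p \in s) /\
  forall x, x \in s -> exists t : R, x = t * p.
Proof.
elim: s => [|x s [p [Hp Hs]]]; first by exists 0; split; [left|].
case: Hp => [->|ps].
  exists x; split; first by right; rewrite inE eqxx.
  by move=> y; rewrite inE => /eqP ->; exists 1; rewrite mul1r.
case: (pI_cmp x p) => [[t ext]|[t ept]].
  exists p; split; first by right; rewrite inE ps orbT.
  by move=> y; rewrite inE => /orP[/eqP ->|/Hs //]; exists t.
exists x; split; first by right; rewrite inE eqxx.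
move=> y; rewrite inE => /orP[/eqP ->|/Hs [t' ->]]; first by exists 1; rewrite mul1r.
by exists (t' * t); rewrite ept mulrA.
Qed.

End Residue.

Local Open Scope quotient_scope.

Section PolyPart.
Variable R : finComUnitRingType.
Hypothesis chR : chain_ring R.
Local Notation kF := (kF chR).
Definition piRm : {rmorphism R -> kF} := \pi_kF.

Lemma piRm_eq0 x : (piRm x == 0) = (x \in @mpred R).
Proof. exact: piR_eq0. Qed.

Lemma piRmK (x : kF) : piRm (repr x) = x.
Proof. exact: reprK. Qed.

Local Notation mp := (map_poly piRm).

Definition liftp (F : {poly kF}) : {poly R} := \poly_(i < size F) repr F`_i.

Lemma liftpK F : mp (liftp F) = F.
Proof.
apply/polyP => i; rewrite coef_map coef_poly.
case: ltnP => H; first by apply: piRmK.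
by rewrite nth_default //; apply: rmorph0.
Qed.

Lemma mp_coef0 (P : {poly R}) : mp P = 0 -> forall i, P`_i \in @mpred R.
Proof. by move=> e i; rewrite -piRm_eq0 -coef_map e coef0. Qed.

Lemma unit_mod_size (P : {poly R}) : unit_mod_m P -> size (mp P) = 1%N.
Proof.
case=> u0 ui.
have -> : mp P = (piRm P`_0)%:P.
  apply/polyP => i; rewrite coef_map coefC; case: i => [|i] //=.
  by apply/eqP; rewrite piRm_eq0 mpredE; move: (ui i.+1 isT); rewrite inE.
by rewrite size_polyC piRm_eq0 mpredE u0.
Qed.

Variable h : {poly R}.
Hypothesis hmon : h \is monic.
Hypothesis hirr : irreducible_mod_m h.

Lemma size_mp_h : size (mp h) = size h.
Proof. by rewrite size_map_poly_id0 // (eqP hmon) rmorph1 oner_neq0. Qed.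

Lemma size_mp_le (P : {poly R}) : (size (mp P) <= size P)%N.
Proof. exact: size_poly. Qed.

Lemma unit_mod (q : {poly R}) k : q`_k \is a GRing.unit -> (size q < size h)%N ->
  exists U V E : {poly R}, U * q + V * h = 1 + E /\ forall i, E`_i \in @mpred R.
Proof.
move=> qk sq.
set qb := mp q; set hb := mp h.
have qb0 : qb != 0.
  apply/eqP => e; move: (mp_coef0 e k); by rewrite mpredE qk.
have cop : coprimep qb hb.
  set G := gcdp qb hb.
  have dG : G %| hb by exact: dvdp_gcdr.
  have eh : hb %/ G * G = hb by exact: divpK.
  have := hirr.2 (liftp (hb %/ G)) (liftp G).
  case.
  - move=> i; rewrite inE -mpredE; apply: (mp_coef0 _ i); by rewrite rmorphB rmorphM /= !liftpK eh subrr.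
  - move/unit_mod_size; rewrite liftpK => s1.
    have sG : size G = size hb.
      rewrite -eh (size1_polyC (eq_leq s1)) size_Cmul //.
      have s2 := s1; apply: contra_eqN s1 => /eqP c0; by rewrite (size1_polyC (eq_leq s2)) c0 size_polyC eqxx.
    have := dvdp_leq qb0 (dvdp_gcdl qb hb); rewrite -/G sG size_mp_h.
    by move=> H; have := leq_trans H (size_mp_le q); rewrite leqNgt sq.
  - by move/unit_mod_size; rewrite liftpK /coprimep => ->.
case/Bezout_coprimepP: cop => [[u v]] /= e1.
have : size (u * qb + v * hb) == 1%N by rewrite size_poly_eq1.
move=> /eqP s1; have := size1_polyC (eq_leq s1); set c := _`_0 => ec.
have c0 : c != 0 by apply: contra_eqN s1 => /eqP c0; rewrite ec c0 size_polyC eqxx.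
exists (liftp (c^-1 *: u)), (liftp (c^-1 *: v)).
exists (liftp (c^-1 *: u) * q + liftp (c^-1 *: v) * h - 1).
split; first by rewrite addrCA subrr addr0.
apply: mp_coef0; rewrite rmorphB rmorphD !rmorphM /= !liftpK rmorph1.
by rewrite -!scalerAl -scalerDr ec -mul_polyC -polyCM mulVf // subrr.
Qed.

End PolyPart.

Local Close Scope quotient_scope.

Section SPart.
Variable R : finComUnitRingType.
Hypothesis chR : chain_ring R.
Variable S : comUnitAlgType R.
Variable h : {poly R}.
Variable xi : S.
Hypothesis hmon : h \is monic.
Hypothesis hirr : irreducible_mod_m h.
Hypothesis hpres : presents h xi.

Local Notation ev := (aeval xi).

Lemma evD p q : ev (p + q) = ev p + ev q.
Proof. by rewrite /aeval rmorphD hornerD. Qed.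
Lemma evB p q : ev (p - q) = ev p - ev q.
Proof. by rewrite /aeval rmorphB hornerD hornerN. Qed.
Lemma evM p q : ev (p * q) = ev p * ev q.
Proof. by rewrite /aeval rmorphM hornerM. Qed.
Lemma ev1 : ev 1 = 1.
Proof. by rewrite /aeval rmorph1 hornerC. Qed.
Lemma evZ c p : ev (c *: p) = c%:A * ev p.
Proof. by rewrite -mul_polyC evM /aeval map_polyC hornerC. Qed.

Lemma evh : ev h = 0.
Proof. by apply/(hpres.2 h).2; exists 1; rewrite mul1r. Qed.

Lemma small_rep (y : S) : exists p : {poly R}, (size p < size h)%N /\ y = ev p.
Proof.
have [p ->] := hpres.1 y.
exists (Pdiv.Ring.rmodp p h); split; first by rewrite Pdiv.Ring.ltn_rmodpN0 // monic_neq0.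
by rewrite {1}(Pdiv.RingMonic.rdivp_eq hmon p) evD evM evh mulr0 add0r.
Qed.

Lemma ev_nil (E : {poly R}) : (forall i, E`_i \in @mpred R) ->
  exists K, ev E ^+ K = 0.
Proof.
move=> HE.
have [p0 [Hp Hs]] := gen_seq chR (enum (@mpred R)).
have p0m : p0 \in @mpred R.
  case: Hp => [e|]; last by rewrite mem_enum.
  have := mpred_ideal chR; case=> m0 _ _; by move: (mem_enum (@mpred R) (0 : R)); rewrite e in_nil m0.
have [K pK] := nilp chR p0m.
pose t i := odflt 0 [pick t | E`_i == t * p0].
have eE : E = p0 *: \poly_(i < size E) t i.
  apply/polyP => i; rewrite coefZ coef_poly; case: ltnP => Hi; last first.
    by rewrite mulr0 nth_default.
  rewrite /t; case: pickP => [s /eqP -> | H]; first by rewrite mulrC.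
  have /Hs [s es] : E`_i \in enum (@mpred R) by rewrite mem_enum.
  by move: (H s); rewrite es eqxx.
by exists K; rewrite eE evZ exprMn -in_algE -rmorphXn pK rmorph0 mul0r.
Qed.

Lemma unit_nil (e : S) K : e ^+ K = 0 -> 1 + e \is a GRing.unit.
Proof.
move=> eK; apply/unitrPr; exists (\sum_(i < K) (- e) ^+ i).
have := subrX1 (- e) K.
have -> : (- e) ^+ K = 0 by rewrite -mulN1r exprMn eK mulr0.
rewrite sub0r => H; apply: oppr_inj; by rewrite -mulNr opprD [- 1 + _]addrC -H.
Qed.

Lemma decomp (y : S) : exists r u, u \is a GRing.unit /\ y = r%:A * u.
Proof.
have [p [sp ->]] := small_rep y.
have [->|p0] := eqVneq p 0.
  by exists 0, 1; rewrite unitr1 scale0r mul0r /aeval rmorph0 horner0.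
have [c [Hc Hs]] := gen_seq chR p.
have cp : c \in (p : seq R).
  by case: Hc => // e; move: p0; rewrite -size_poly_eq0 -[size p]/(size (p : seq R)) e.
pose t i := if p`_i == c then 1 else odflt 0 [pick t | p`_i == t * c].
pose q := \poly_(i < size p) t i.
have ep : p = c *: q.
  apply/polyP => i; rewrite coefZ coef_poly; case: ltnP => Hi; last first.
    by rewrite mulr0 nth_default.
  rewrite /t; case: eqP => [->|_]; first by rewrite mulr1.
  case: pickP => [s /eqP -> | H]; first by rewrite mulrC.
  have [s es] := Hs (p`_i) (mem_nth 0 Hi).
  by move: (H s); rewrite es eqxx.
have qk : q`_(index c p) \is a GRing.unit.
  rewrite coef_poly index_mem cp /t nth_index // eqxx; exact: unitr1.
have sq : (size q < size h)%N by apply: leq_ltn_trans (size_poly _ _) sp.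
have [U [V [E [eUV HE]]]] := unit_mod chR hmon hirr qk sq.
have [K eK] := ev_nil HE.
have : ev U * ev q \is a GRing.unit.
  have := congr1 ev eUV; rewrite evD !evM evh mulr0 addr0 evD ev1 => ->.
  exact: unit_nil eK.
rewrite unitrM => /andP[_ uq].
by exists c, (ev q); rewrite ep evZ.
Qed.

End SPart.

Section Dops.
Variable R : finComUnitRingType.
Variable S : comUnitAlgType R.
Variable sigma : {rmorphism S -> S}.

Lemma iterM s (x y : S) : iter s sigma (x * y) = iter s sigma x * iter s sigma y.
Proof. by elim: s => //= s ->; rewrite rmorphM. Qed.
Lemma iterB s (x y : S) : iter s sigma (x - y) = iter s sigma x - iter s sigma y.
Proof. by elim: s => //= s ->; rewrite rmorphB. Qed.
Lemma iter0 s : iter s sigma 0 = 0.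
Proof. by elim: s => //= s ->; rewrite rmorph0. Qed.

Lemma Dop0 a y : Dop sigma a 0 y = y.
Proof. by rewrite /Dop /Nsig big_ord0 mulr1. Qed.

Lemma DopS a s y : Dop sigma a s.+1 y = Dop sigma a s (sigma y * a).
Proof.
rewrite /Dop /Nsig big_ord_recr /= iterM -iterSr /=.
by ring.
Qed.

Lemma DopM a s b y : Dop sigma a s (b * y) = iter s sigma b * Dop sigma a s y.
Proof. by rewrite /Dop iterM mulrA. Qed.

Lemma DopB a s y z : Dop sigma a s (y - z) = Dop sigma a s y - Dop sigma a s z.
Proof. by rewrite /Dop iterB mulrBl. Qed.

Lemma Dop_zero a s : Dop sigma a s 0 = 0.
Proof. by rewrite /Dop iter0 mul0r. Qed.

End Dops.

Section Main.
Variable R : finComUnitRingType.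
Variable S : comUnitAlgType R.
Variable sigma : {rmorphism S -> S}.
Hypothesis Hlin : forall r : R, sigma (r%:A) = r%:A.
Hypothesis Hfix : forall y : S, sigma y = y -> exists r : R, y = r%:A.
Hypothesis Hdec : forall y : S, exists (r : R) (u : S), u \is a GRing.unit /\ y = r%:A * u.

Lemma sigZ (r : R) (y : S) : sigma (r *: y) = r *: sigma y.
Proof. by rewrite -[r *: y]mulr_algl -[r *: sigma y]mulr_algl rmorphM Hlin. Qed.

Lemma unit_of_indep (b : S) : (forall r : R, r *: b = 0 -> r = 0) -> b \is a GRing.unit.
Proof.
move=> Hb; have [r [u [uu eb]]] := Hdec b; rewrite eb in Hb *.
case ur: (r \is a GRing.unit).
  by rewrite unitrM uu andbT -in_algE; apply: rmorph_unit; rewrite ur.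
have [c c0 cr] := zdiv (negbT ur).
have := Hb c; rewrite -[c *: _]mulr_algl mulrA -[c%:A]in_algE -[r%:A]in_algE -rmorphM /= cr.
by rewrite scale0r mul0r => /(_ erefl) c00; move: c0; rewrite c00 eqxx.
Qed.

Variables (a0 b0 : S).
Hypothesis a0u : a0 \is a GRing.unit.
Hypothesis b0u : b0 \is a GRing.unit.
Let bb := sigma b0 * a0 / b0.

Lemma fix_case (y : S) : sigma y * a0 - bb * y = 0 -> exists r : R, y = r *: b0.
Proof.
move=> /eqP; rewrite subr_eq0 => /eqP H.
have sbu : sigma b0 \is a GRing.unit by apply: rmorph_unit.
have : sigma (y / b0) = y / b0.
  rewrite rmorphM rmorphV //=.
  apply: (@mulIr _ (sigma b0 * a0)); first by rewrite unitrM sbu a0u.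
  transitivity (sigma y * a0 * ((sigma b0)^-1 * sigma b0)); first by ring.
  rewrite mulVr // mulr1 H /bb; ring.
case/Hfix => r e; exists r.
by rewrite -mulr_algl -e -mulrA mulVr // mulr1.
Qed.

Variables (ai : S).
Hypothesis Hnc : forall u, u \is a GRing.unit -> ai - sconj sigma a0 u \is a GRing.unit.

Lemma noncong_case (y : S) : sigma y * ai - bb * y = 0 -> y = 0.
Proof.
move=> H; have [r [u [uu ey]]] := Hdec y.
have suu : sigma u \is a GRing.unit by apply: rmorph_unit.
have e : sigma u * ai - bb * u = sigma u * (ai - sconj sigma a0 (b0 / u)).
  rewrite /sconj rmorphM rmorphV //= invrM ?unitrV // invrK /bb.
  transitivity (sigma u * ai - sigma b0 * a0 * b0^-1 * u * (sigma u * (sigma u)^-1)).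
    by rewrite mulrV // mulr1.
  ring.
have : r%:A * (sigma u * ai - bb * u) = 0.
  rewrite -H ey rmorphM.
  have -> : sigma r%:A = r%:A by apply: Hlin.
  ring.
have hu : sigma u * (ai - sconj sigma a0 (b0 / u)) \is a GRing.unit.
  by rewrite unitrM suu Hnc // unitrM b0u unitrV.
rewrite e => /(congr1 (fun z => z * (sigma u * (ai - sconj sigma a0 (b0 / u)))^-1)).
rewrite -mulrA mulrV // mulr1 mul0r => r0.
by rewrite ey r0 mul0r.
Qed.

End Main.

Section Gen.
Variable R : finComUnitRingType.
Variable S : comUnitAlgType R.
Variable sigma : {rmorphism S -> S}.
Hypothesis Hlin : forall r : R, sigma (r%:A) = r%:A.
Hypothesis Hfix : forall y : S, sigma y = y -> exists r : R, y = r%:A.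
Hypothesis Hdec : forall y : S, exists (r : R) (u : S), u \is a GRing.unit /\ y = r%:A * u.
Variable l : nat.
Variable a : 'I_l -> S.
Hypothesis Hu : forall i, a i \is a GRing.unit.
Hypothesis Hc : forall i j : 'I_l, i != j -> forall u, u \is a GRing.unit ->
  a i - sconj sigma (a j) u \is a GRing.unit.

Definition Amat N (g : 'I_N -> 'I_l) (bt : 'I_N -> S) : 'M[S]_N :=
  \matrix_(s < N, k < N) Dop sigma (a (g k)) s (bt k).

Definition indep N (g : 'I_N -> 'I_l) (bt : 'I_N -> S) :=
  forall (i : 'I_l) (c : 'I_N -> R), (forall k, g k != i -> c k = 0) ->
    \sum_k c k *: bt k = 0 -> forall k, c k = 0.

Section Step.
Variable N : nat.
Variables (g : 'I_N.+1 -> 'I_l) (bt : 'I_N.+1 -> S).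
Hypothesis Hind : indep g bt.
Hypothesis b0u : bt ord0 \is a GRing.unit.
Let b := sigma (bt ord0) * a (g ord0) / bt ord0.
Let g' := fun k : 'I_N => g (lift ord0 k).
Let bt' := fun k : 'I_N => sigma (bt (lift ord0 k)) * a (g' k) - b * bt (lift ord0 k).

Lemma indep_step : indep g' bt'.
Proof.
move=> i c' Hs Hsum.
set y := \sum_k c' k *: bt (lift ord0 k).
have ey : sigma y * a i - b * y = 0.
  rewrite -Hsum /y rmorph_sum mulr_suml mulr_sumr -sumrB; apply: eq_bigr => k _.
  case: (eqVneq (g' k) i) => [<-|ne].
    by rewrite sigZ // /bt' scalerBr scalerAl scalerAr.
  by rewrite Hs // !scale0r rmorph0 mul0r mulr0 subrr.
have [r [er hr]] : exists r : R, y = r *: bt ord0 /\ (g ord0 != i -> r = 0).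
  case: (eqVneq (g ord0) i) => [e|ne].
    have ey' : sigma y * a (g ord0) - b * y = 0 by rewrite e.
    have [r er] := fix_case Hfix (Hu (g ord0)) b0u ey'.
    by exists r; split => //; rewrite e eqxx.
  exists 0; split => //; rewrite scale0r.
  have Hnc : forall u, u \is a GRing.unit -> a i - sconj sigma (a (g ord0)) u \is a GRing.unit.
    by move=> u uu; apply: Hc => //; rewrite eq_sym.
  exact: (noncong_case Hlin Hdec b0u Hnc ey).
pose c k := if unlift ord0 k is Some k' then c' k' else - r.
have Hc0 : forall k, c k = 0.
  apply: (Hind (i := i)).
    move=> k; rewrite /c; case: unliftP => [k' -> | ->] gk.
      by apply: Hs.
    by rewrite hr ?oppr0.
  rewrite big_ord_recl /c unlift_none.
  under eq_bigr => k _ do rewrite liftK.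
  by rewrite -/y er scaleNr addNr.
by move=> k; have := Hc0 (lift ord0 k); rewrite /c liftK.
Qed.


Lemma mat_step : Amat g' bt' \in unitmx -> Amat g bt \in unitmx.
Proof.
move=> uA'.
set A := Amat g bt.
pose cc (s : nat) := iter s.-1 sigma b.
pose D : 'M[S]_N.+1 := \matrix_(s, t) (((s != 0%N :> nat) && (t.+1 == s))%:R * cc s).
pose P : 'M[S]_N.+1 := 1%:M - D.
have PA0 : forall k, (P *m A) ord0 k = A ord0 k.
  move=> k; rewrite mulmxBl mul1mx !mxE big1 ?subr0 // => t _.
  by rewrite !mxE /= mul0r mul0r.
have PAS : forall (s : 'I_N) k, (P *m A) (lift ord0 s) k =
    A (lift ord0 s) k - iter s sigma b * A (widen_ord (leqnSn N) s) k.
  move=> s k; rewrite mulmxBl mul1mx !mxE (bigD1 (widen_ord (leqnSn N) s)) //=.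
  rewrite big1 ?addr0 ?mxE /= ?eqxx ?mul1r //.
  move=> t ne; rewrite !mxE /=.
  case: eqP => [e|_]; last by rewrite mul0r mul0r.
  have et : t = widen_ord (leqnSn N) s.
    by apply/val_inj => /=; move: e => /eqP; rewrite /bump leq0n add1n eqSS => /eqP.
  by move: ne; rewrite et eqxx.
have key : forall (j : 'I_N.+1) (s : 'I_N), (P *m A) (lift ord0 s) j =
    Dop sigma (a (g j)) s (sigma (bt j) * a (g j) - b * bt j).
  move=> j s; by rewrite PAS /A !mxE lift0 /= DopS DopB [Dop _ _ _ (b * _)]DopM.
have hdl : dlsubmx (P *m A : 'M_(1 + N)) = 0.
  apply/matrixP => i j; rewrite [LHS]mxE [LHS]mxE [RHS]mxE.
  have -> : rshift 1 i = lift ord0 i :> 'I_(1 + N) by apply/val_inj.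
  have -> : lshift N j = ord0 :> 'I_(1 + N) by apply/val_inj; rewrite /= ord1.
  rewrite key /b -mulrA mulVr // mulr1 subrr; exact: Dop_zero.
have hdr : drsubmx (P *m A : 'M_(1 + N)) = Amat g' bt'.
  apply/matrixP => i j; rewrite [LHS]mxE [LHS]mxE /Amat [RHS]mxE.
  have -> : rshift 1 i = lift ord0 i :> 'I_(1 + N) by apply/val_inj.
  have -> : rshift 1 j = lift ord0 j :> 'I_(1 + N) by apply/val_inj.
  by rewrite key.
have hul : \det (ulsubmx (P *m A : 'M_(1 + N))) = bt ord0.
  rewrite det_mx11 mxE mxE.
  have -> : lshift N (0 : 'I_1) = ord0 :> 'I_(1 + N) by apply/val_inj.
  by rewrite PA0 /A mxE Dop0.
have hdet : \det P * \det A = bt ord0 * \det (Amat g' bt').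
  rewrite -det_mulmx -[P *m A](@submxK _ 1 N 1 N) hdl.
  apply: (etrans (@det_ublock _ 1 N _ _ _)); by rewrite hul hdr.
have : \det P * \det A \is a GRing.unit.
  by rewrite hdet unitrM b0u -unitmxE uA'.
by rewrite unitrM unitmxE => /andP[].
Qed.

End Step.


Theorem gen N : forall g bt, @indep N g bt -> Amat g bt \in unitmx.
Proof.
elim: N => [|N IH] g bt Hind.
  by rewrite unitmxE det_mx00 unitr1.
have b0u : bt ord0 \is a GRing.unit.
  apply: (unit_of_indep Hdec) => r e.
  have := Hind (g ord0) (fun k => if k == ord0 then r else 0) _ _ ord0.
  rewrite eqxx; apply.
    by move=> k; case: (k =P ord0) => [->|]; rewrite ?eqxx.

  rewrite big_ord_recl eqxx big1 ?addr0 // => k _.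
  by rewrite eq_sym (negbTE (neq_lift _ _)) scale0r.
apply: (mat_step b0u); apply: IH.
exact: (indep_step Hind b0u).
Qed.

End Gen.

Unset Implicit Arguments.
Set Strict Implicit.
Set Printing Implicit Defensive.

Theorem theorem3 (R : finComUnitRingType) (S : comUnitAlgType R)
  (h : {poly R}) (xi : S) (sigma : {rmorphism S -> S})
  (l : nat) (n : 'I_l -> nat)
  (a : 'I_l -> S) (beta : forall i : 'I_l, 'I_(n i) -> S) :
  chain_ring R ->
  h \is monic ->
  irreducible_mod_m h ->
  presents h xi ->
  galois_generator sigma ->
  (forall i, a i \is a GRing.unit) ->
  (forall (b : S) (i j : 'I_l), b \is a GRing.unit -> (i < j)%N ->
     a i - sconj sigma (a j) b \is a GRing.unit) ->
  (forall (i : 'I_l) (c : 'I_(n i) -> R),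
     \sum_(j < n i) c j *: beta i j = 0 -> forall j, c j = 0) ->
  Mmat sigma a beta \in unitmx.
Proof.
move=> chR hmon hirr hpres [[_ Hlin] _ Hfix _] Hu Hcon Hind.
have Hdec := decomp chR hmon hirr hpres.
have Hc : forall i j : 'I_l, i != j -> forall u, u \is a GRing.unit ->
    a i - sconj sigma (a j) u \is a GRing.unit.
  move=> i j ne u uu; case: (ltngtP i j) => [lt|lt|e]; first exact: Hcon.
    have H : a j - sconj sigma (a i) u^-1 \is a GRing.unit by apply: Hcon; rewrite ?unitrV.
    have suu : sigma u \is a GRing.unit by apply: rmorph_unit.
    have -> : a i - sconj sigma (a j) u =
        - (sigma u * (a j - sconj sigma (a i) u^-1) * u^-1).
      rewrite /sconj rmorphV // invrK.
      transitivity (a i * (sigma u * (sigma u)^-1) * (u * u^-1) - sigma u * a j * u^-1).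
        by rewrite !mulrV // !mulr1.
      ring.
    by rewrite unitrN !unitrM suu H unitrV uu.
  by move: ne; rewrite (val_inj e) eqxx.
pose g := fun k : 'I_(\sum_(i < l) n i) => tagnat.sig1 k.
pose bt := fun k : 'I_(\sum_(i < l) n i) => beta (tagnat.sig1 k) (tagnat.sig2 k).
have -> : Mmat sigma a beta = Amat sigma a g bt.
  by apply/matrixP => s k; rewrite !mxE.
apply: (gen Hlin Hfix Hdec Hu Hc).
move=> i c Hs Hsum.
pose T := fun i : 'I_l => 'I_(n i).
pose cc := fun (i' : 'I_l) (j : 'I_(n i')) => c (tagnat.rank (Tagged T j)).
have Hz : forall j, cc i j = 0.
  apply: Hind; rewrite -[RHS]Hsum; symmetry.
  rewrite (reindex (@tagnat.rank _ n) tagnat.rank_bij_on) /=.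
  have -> : \sum_(p : {i0 : 'I_l & 'I_(n i0)}) c (tagnat.rank p) *: bt (tagnat.rank p)
      = \sum_(p : {i0 : 'I_l & 'I_(n i0)}) cc (tag p) (tagged p) *: beta (tag p) (tagged p).
    apply: eq_bigr => -[i0 j] _.
    by rewrite /bt /cc /tagnat.sig1 /tagnat.sig2 tagnat.rankK.
  transitivity (\sum_(i0 < l) \sum_(j < n i0) cc i0 j *: beta i0 j).
    by rewrite sig_big_dep.
  rewrite (bigD1 i) //= [X in _ + X = _]big1 ?addr0 // => i0 ne.
  apply: big1 => j _; rewrite /cc Hs ?scale0r //.
  by rewrite /g /tagnat.sig1 tagnat.rankK.
move=> k; rewrite -(tagnat.sigK k); case: (tagnat.sig k) => i0 j.
case: (eqVneq i0 i) => [e|ne].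
  by move: j; rewrite e => j; apply: Hz.
by apply: Hs; rewrite /g /tagnat.sig1 tagnat.rankK.
Qed.
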